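(* Consider a stationary memoryless uncertain channel with single-symbol map $N$ as described in the context, and let $0\le\delta_1<m_{\mathscr{Y}}(V_N)$. Let $\bar X$ be a one-step transmitted UV with $[\![\bar X]\!]\subseteq\mathscr{X}$, $\bar Y$ its received UV, and $\bar\delta\ge0$ such that $\bar X\in\mathscr{F}_{\bar\delta}(1)$, $\bar\delta\le\delta_1/m_{\mathscr{Y}}([\![\bar Y]\!])$, and $$I_{\bar\delta/|[\![\bar X]\!]|}(\bar Y;\bar X)=\sup\Big\{I_{\tilde\delta/|[\![X(1)]\!]|}(Y(1);X(1)) : \tilde\delta\ge0,\ X(1)\in\mathscr{F}_{\tilde\delta}(1),\ \tilde\delta\le\delta_1/m_{\mathscr{Y}}([\![Y(1)]\!])\Big\}.$$ Suppose that (a) for every $x\in\mathscr{X}\setminus[\![\bar X]\!]$ there is $S\in[\![\bar Y|\bar X]\!]^*_{\bar\delta/|[\![\bar X]\!]|}$ with $N(x)\subseteq S$; (b) $\bar\delta(1+1/|[\![\bar X]\!]|)\le\delta_1/m_{\mathscr{Y}}([\![\bar Y]\!])$; and (c) for all $n>1$, $0\le\delta_n\le(\bar\delta\, m_{\mathscr{Y}}(V_N)/|[\![\bar X]\!]|)^n$. Then, under the product uncertainty assumption and the union bound assumption, $C_N(\{\delta_n\})^*=I_{\bar\delta/|[\![\bar X]\!]|}(\bar Y;\bar X)$.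
   Context: Uncertain variables (UVs): a UV is a map $U$ from a sample space $\Omega$ to a set; jointly considered UVs share $\Omega$. $[\![U]\!]=\{U(\omega)\}$; $[\![U|w]\!]=\{U(\omega):W(\omega)=w\}$, $[\![U|W]\!]=\{[\![U|w]\!]:w\in[\![W]\!]\}$. An uncertainty function on a set $\mathscr{U}$ is a map $m$ on subsets of $\mathscr{U}$ with $m(\emptyset)=0$, $0<m(S)<\infty$ for nonempty $S$, $\max\{m(S_1),m(S_2)\}\le m(S_1\cup S_2)$. Association: $\mathscr{A}(X;Y)=\{m_{\mathscr{X}}([\![X|y_1]\!]\cap[\![X|y_2]\!])/m_{\mathscr{X}}([\![X]\!]):y_1\ne y_2\in[\![Y]\!]\}\setminus\{0\}$, $\mathscr{A}(Y;X)=\{m_{\mathscr{Y}}([\![Y|x_1]\!]\cap[\![Y|x_2]\!])/m_{\mathscr{Y}}([\![Y]\!]):x_1\ne x_2\in[\![X]\!]\}\setminus\{0\}$; $\mathscr{A}\succ\delta$: all elements $>\delta$ (false for $\emptyset$); $\mathscr{A}\preceq\delta$: all elements $\le\delta$ (true for $\emptyset$); $(X,Y)\stackrel{d}{\leftrightarrow}(\delta_1,\delta_2)$ iff $\mathscr{A}(X;Y)\succ\delta_1,\mathscr{A}(Y;X)\succ\delta_2$; $(X,Y)\stackrel{a}{\leftrightarrow}(\delta_1,\delta_2)$ iff $\mathscr{A}(X;Y)\preceq\delta_1,\mathscr{A}(Y;X)\preceq\delta_2$. $\delta$-mutual information: for UVs $U$ (with uncertainty function $m_{\mathscr{U}}$)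 and $W$, $u,u'\in[\![U]\!]$ are $\delta$-connected via $[\![U|W]\!]$ if there are $w_1,\dots,w_N\in[\![W]\!]$ with $u\in[\![U|w_1]\!]$, $u'\in[\![U|w_N]\!]$, $m_{\mathscr{U}}([\![U|w_i]\!]\cap[\![U|w_{i-1}]\!])/m_{\mathscr{U}}([\![U]\!])>\delta$ for $1<i\le N$; a set is $\delta$-connected if all pairs of its points are. A $\delta$-overlap family $[\![U|W]\!]^*_\delta$ is a family of distinct subsets covering $[\![U]\!]$, of largest cardinality among covering families with (i) each member $\delta$-connected and containing some $[\![U|w]\!]$; (ii) distinct members $S_1,S_2$ satisfy $m_{\mathscr{U}}(S_1\cap S_2)\le\delta\,m_{\mathscr{U}}([\![U]\!])$; (iii) each $[\![U|w]\!]$ contained in some member. $I_\delta(U;W)=\log_2|[\![U|W]\!]^*_\delta|$ if such a family exists, else $0$. Stationary memoryless channel: $\mathscr{X}$ is a totally bounded normed metric space, $\mathscr{Y}$ an output set, $N:\mathscr{X}\to2^{\mathscr{Y}}$; for $x(1:n)\in\mathscr{X}^n$, $S_N(x(1:n))=N(x(1))\times\cdots\times N(x(n))$. $m_{\mathscr{Y}}$ (resp. $m_{\mathscr{X}}$) is an uncertainty function on each $\mathscr{Y}^n$ (resp. $\mathscr{X}^n$), with $m_{\mathscr{Y}}(\mathscr{Y}^n)=1$. $V_N=N(x^* )$ with $x^*$ minimizing $m_{\mathscr{Y}}(N(x))$; $V_N^n=V_N\times\cdots\times V_N$. A discrete $\mathcal{C}_n\subseteq\mathscr{X}^n$ is $(N,\delta_n)$-distinguishable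 (for $0\le\delta_n<m_{\mathscr{Y}}(V_N^n)$) if $m_{\mathscr{Y}}(S_N(x_1(1:n))\cap S_N(x_2(1:n)))/m_{\mathscr{Y}}(\mathscr{Y}^n)\le\delta_n/|\mathcal{C}_n|$ for all distinct codewords; $R_{\delta_n}=\sup\frac1n\log_2|\mathcal{C}_n|$ over such codebooks; $C_N(\{\delta_n\})^*=\sup_{n\ge1}R_{\delta_n}$. For a codebook $\mathcal{C}_n$, transmitted UV $X(1:n)$ and received UV $Y(1:n)$ satisfy $[\![X(1:n)]\!]=\mathcal{C}_n$, $[\![Y(1:n)]\!]=\bigcup_{x(1:n)\in\mathcal{C}_n}S_N(x(1:n))$, $[\![Y(1:n)|x(1:n)]\!]=\{y\in[\![Y(1:n)]\!]:y\in S_N(x(1:n))\}$, $[\![X(1:n)|y(1:n)]\!]=\{x\in[\![X(1:n)]\!]:y(1:n)\in S_N(x)\}$. $\mathscr{F}_\delta(n)$ is the set of transmitted UVs $X(1:n)$ with $[\![X(1:n)]\!]\subseteq\mathscr{X}^n$ such that $(X(1:n),Y(1:n))\stackrel{d}{\leftrightarrow}(0,\delta/|[\![X(1:n)]\!]|)$ or $(X(1:n),Y(1:n))\stackrel{a}{\leftrightarrow}(1,\delta/|[\![X(1:n)]\!]|)$. Product uncertainty assumption: $m_{\mathscr{Y}}(S_1\times\cdots\times S_n)=\prod_i m_{\mathscr{Y}}(S_i)$ for all $n$ and $S_i\subseteq\mathscr{Y}$. Union bound assumption: $m_{\mathscr{Y}}(S_1\cup S_2)\le m_{\mathscr{Y}}(S_1)+m_{\mathscr{Y}}(S_2)$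 for $S_1,S_2\subseteq\mathscr{Y}^n$. *)

(* Defs.v *)
From HB Require Import structures.
From mathcomp Require Import all_boot all_order all_algebra finmap.
From mathcomp Require Import boolp classical_sets functions cardinality.
From mathcomp Require Import reals ereal topology exp.
Set Implicit Arguments. Unset Strict Implicit. Unset Printing Implicit Defensive.
Import Order.TTheory GRing.Theory Num.Theory.
Local Open Scope classical_set_scope.
Local Open Scope ring_scope.

Section UV.
Variable R : realType.

Definition urange (Om T : Type) (U : Om -> T) : set T := U @` setT.
Definition ucrange (Om T S : Type) (U : Om -> T) (W : Om -> S) (w : S) : set T :=
  U @` (W @^-1` [set w]).

Definition uncertainty_function (T : Type) (m : set T -> R) : Prop :=
  m set0 = 0 /\ (forall A, A !=set0 -> 0 < m A) /\
  (forall A B, Num.max (m A) (m B) <= m (A `|` B)).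

Definition assoc (Om T S : Type) (m : set T -> R) (U : Om -> T) (W : Om -> S) : set R :=
  [set r | exists w1 w2, urange W w1 /\ urange W w2 /\ w1 <> w2 /\
     r = m (ucrange U W w1 `&` ucrange U W w2) / m (urange U) /\ r <> 0].

(* A > d (false for the empty set) and A <= d (true for the empty set) *)
Definition assoc_gt (A : set R) (d : R) : Prop := A !=set0 /\ forall r, A r -> d < r.
Definition assoc_le (A : set R) (d : R) : Prop := forall r, A r -> r <= d.

Definition dissoc (Om TX TY : Type) (mX : set TX -> R) (mY : set TY -> R)
  (X : Om -> TX) (Y : Om -> TY) (d1 d2 : R) : Prop :=
  assoc_gt (assoc mX X Y) d1 /\ assoc_gt (assoc mY Y X) d2.
Definition associated (Om TX TY : Type) (mX : set TX -> R) (mY : set TY -> R)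
  (X : Om -> TX) (Y : Om -> TY) (d1 d2 : R) : Prop :=
  assoc_le (assoc mX X Y) d1 /\ assoc_le (assoc mY Y X) d2.

Section Idelta.
Variables (Om T S : Type) (m : set T -> R) (U : Om -> T) (W : Om -> S) (d : R).

(* u, u' are d-connected via [[U|W]]  (chain w 0, ..., w k, i.e. N = k+1 >= 1) *)
Definition dconnected (u u' : T) : Prop :=
  exists (k : nat) (w : nat -> S),
    (forall i, (i <= k)%N -> urange W (w i)) /\
    ucrange U W (w 0%N) u /\ ucrange U W (w k) u' /\
    (forall i, (0 < i <= k)%N ->
       d < m (ucrange U W (w i) `&` ucrange U W (w i.-1)) / m (urange U)).

Definition dconnected_set (A : set T) : Prop :=
  forall u u', A u -> A u' -> dconnected u u'.

Definition admissible_family (F : set (set T)) : Prop :=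
  (forall A, F A -> A `<=` urange U) /\
  (forall u, urange U u -> exists A, F A /\ A u) /\
  (forall A, F A -> dconnected_set A /\
                    exists w, urange W w /\ ucrange U W w `<=` A) /\
  (forall A1 A2, F A1 -> F A2 -> A1 <> A2 -> m (A1 `&` A2) <= d * m (urange U)) /\
  (forall w, urange W w -> exists A, F A /\ ucrange U W w `<=` A).

Definition overlap_family (F : set (set T)) : Prop :=
  admissible_family F /\ forall G, admissible_family G -> card_le G F.

Definition log2 (x : R) : R := ln x / ln 2.

(* I_d(U;W) = log2 |[[U|W]]*_d| if an overlap family exists (+oo if infinite), else 0.
   (All overlap families have the same cardinality, so the set below is a singleton.) *)
Definition Idelta : \bar R :=
  ereal_sup [set v : \bar R |
    (exists F, overlap_family F /\
       ((exists k : nat, card_eq F `I_k /\ v = (log2 k%:R)%:E) \/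
        (infinite_set F /\ v = +oo%E))) \/
    ((forall F, ~ overlap_family F) /\ v = 0%E)].
End Idelta.

Section Channel.
Variables (X : choiceType) (Y : Type) (N : X -> set Y).

(* one-step transmitted / received UVs of a (finite, nonempty) codebook C subset of X:
   sample space Om_C = {(x,y) | x in C, y in N x}, X(1) = first, Y(1) = second projection.
   Then [[X(1)]] = C, [[Y(1)]] = U_{x in C} N x, [[Y(1)|x]] = N x, [[X(1)|y]] = {x in C | y in N x}. *)
Definition chOm (C : {fset X}) := {p : X * Y | p.1 \in C /\ N p.1 p.2}.
Definition chX (C : {fset X}) : chOm C -> X := fun o => (proj1_sig o).1.
Definition chY (C : {fset X}) : chOm C -> Y := fun o => (proj1_sig o).2.

Definition inF1 (mX : set X -> R) (mY : set Y -> R) (d : R) (C : {fset X}) : Prop :=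
  C != fset0 /\
  (dissoc mX mY (@chX C) (@chY C) 0 (d / (#|` C|)%:R) \/
   associated mX mY (@chX C) (@chY C) 1 (d / (#|` C|)%:R)).

Definition I1 (mY : set Y -> R) (d : R) (C : {fset X}) : \bar R :=
  Idelta mY (@chY C) (@chX C) (d / (#|` C|)%:R).

Definition rangeY1 (C : {fset X}) : set Y := urange (@chY C).

Definition SN n (x : n.-tuple X) : set (n.-tuple Y) :=
  [set y | forall i, N (tnth x i) (tnth y i)].

Definition distinguishable (mYn : forall n, set (n.-tuple Y) -> R)
  n (C : {fset n.-tuple X}) (dn : R) : Prop :=
  forall x1 x2, x1 \in C -> x2 \in C -> x1 != x2 ->
    mYn n (SN x1 `&` SN x2) / mYn n setT <= dn / (#|` C|)%:R.

Definition rate (mYn : forall n, set (n.-tuple Y) -> R) n (dn : R) : \bar R :=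
  ereal_sup [set ((log2 (#|` C|)%:R) / n%:R)%:E |
     C in [set C : {fset n.-tuple X} | C != fset0 /\ distinguishable mYn C dn]].

Definition capacity (mYn : forall n, set (n.-tuple Y) -> R) (delta : nat -> R) : \bar R :=
  ereal_sup [set rate mYn n (delta n) | n in [set n : nat | (0 < n)%N]].
End Channel.

Definition totally_bounded (X : pseudoMetricType R) : Prop :=
  forall e : R, 0 < e -> exists s : seq X, forall x : X, exists2 c, c \in s & ball c e x.

End UV.

(* Main.v *)
Require Import Defs.
From HB Require Import structures.
From mathcomp Require Import all_boot all_order all_algebra finmap.
From mathcomp Require Import boolp classical_sets functions cardinality.
From mathcomp Require Import reals ereal topology exp.
Import Order.TTheory GRing.Theory Num.Theory.
Local Open Scope classical_set_scope.
Local Open Scope ring_scope.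
From mathcomp Require Import ring lra.
Local Open Scope card_scope.
Section Gen.
Variable R : realType.

Lemma um_mono (T : Type) (m : set T -> R) : uncertainty_function m ->
  forall A B, A `<=` B -> m A <= m B.
Proof.
move=> [_ [_ h]] A B AB; have := h A B; rewrite (setUidr AB).
by rewrite ge_max => /andP[].
Qed.

Lemma um_ge0 (T : Type) (m : set T -> R) : uncertainty_function m ->
  forall A, 0 <= m A.
Proof.
move=> hm A; have [->|/set0P An] := eqVneq A set0; first by case: hm => ->.
by case: hm => _ [/(_ A An) /ltW].
Qed.

Lemma Idelta_eq (Om T S : Type) (m : set T -> R) (U : Om -> T) (W : Om -> S) (d : R)
  (K : choiceType) (F : set (set T)) (A : {fset K}) (f : K -> set T) :
  overlap_family m U W d F -> F = f @` [set` A] -> {in [set` A] &, injective f} ->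
  Idelta m U W d = (log2 (#|` A|%:R))%:E.
Proof.
move=> oF Fe finj.
have FI : F #= `I_#|` A|.
  rewrite Fe; apply: card_eq_trans (inj_card_eq finj) _.
  exact/card_eq_fsetP.
rewrite /Idelta; set Sv := [set v | _].
suff -> : Sv = [set (log2 (#|` A|%:R))%:E] by rewrite ereal_sup1.
apply/seteqP; split => v /=.
- case=> [[G [oG [[k [Gk ->]]|[Ginf _]]]]|[nF _]].
  + have GF : G #= F.
      by rewrite card_eq_le; apply/andP; split; [apply: oF.2; exact: oG.1|apply: oG.2; exact: oF.1].
    have : `I_k #= `I_#|` A|.
      apply: card_eq_trans (card_esym Gk) _; exact: card_eq_trans GF FI.
    by move/card_eq_II => ->.
  + exfalso; apply: Ginf; exists #|` A|.
    have GF : G #= F.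
      by rewrite card_eq_le; apply/andP; split; [apply: oF.2; exact: oG.1|apply: oG.2; exact: oF.1].
    exact: card_eq_trans GF FI.
  + by have := nF F oF.
- move=> ->; left; exists F; split => //; left; exists #|` A|; split => //.
Qed.
End Gen.
Arguments um_mono {R T m} _ {A B}.
Arguments um_ge0 {R T m}.
Set Implicit Arguments. Unset Strict Implicit.
Section Ch.
Variables (R : realType) (X : choiceType) (Y : Type) (N : X -> set Y).

Lemma ucrange_ch (C : {fset X}) w : w \in C -> ucrange (@chY X Y N C) (@chX X Y N C) w = N w.
Proof.
move=> wC; apply/seteqP; split => y /=.
- case=> [[[x y'] [xC Nxy]]] ow <-; rewrite /chX /= in ow; rewrite /chY /=.
  by rewrite -ow.
- move=> Nwy; exists (exist _ (w, y) (conj wC Nwy)) => //.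
Qed.

Lemma urange_chX (C : {fset X}) w : urange (@chX X Y N C) w -> w \in C.
Proof. by move=> [[[x y] [xC Nxy]] _o <-]. Qed.

Lemma urange_chX' (C : {fset X}) w : w \in C -> N w !=set0 -> urange (@chX X Y N C) w.
Proof. by move=> wC [y Nwy]; exists (exist _ (w, y) (conj wC Nwy)). Qed.

Lemma urange_chY (C : {fset X}) u : urange (@chY X Y N C) u -> exists2 x, x \in C & N x u.
Proof. by move=> [[[x y] [xC Nxy]] _o <-]; exists x. Qed.

Lemma urange_chY' (C : {fset X}) w : w \in C -> N w `<=` urange (@chY X Y N C).
Proof. by move=> wC y Nwy; exists (exist _ (w, y) (conj wC Nwy)). Qed.


Lemma ucrange_sub (T S Om : Type) (U : Om -> T) (W : Om -> S) w :
  ucrange U W w `<=` urange U.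
Proof. by move=> x [o _ <-]; exists o. Qed.

Lemma codeI (mX : set X -> R) (mY1 : set Y -> R)
  (hmX : uncertainty_function mX) (hmY1 : uncertainty_function mY1)
  (d1 : R) (hd1 : 0 <= d1) (hN : forall x, d1 < mY1 (N x))
  (C : {fset X}) (C0 : C != fset0)
  (hC : forall y1 y2, y1 \in C -> y2 \in C -> y1 != y2 ->
          mY1 (N y1 `&` N y2) <= d1 / (#|` C|)%:R) :
  inF1 N mX mY1 (d1 / mY1 (rangeY1 N C)) C /\
  I1 N mY1 (d1 / mY1 (rangeY1 N C)) C = (log2 (#|` C|)%:R)%:E.
Proof.
have Nne x : N x !=set0.
  apply/set0P/negP => /eqP N0; have := hN x; rewrite N0.
  by case: hmY1 => -> _; rewrite ltNge hd1.
have [x0 x0C] := fset0Pn _ C0.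
set r := mY1 (rangeY1 N C).
have r0 : 0 < r.
  have := um_mono hmY1 (urange_chY' x0C); rewrite /r /rangeY1; apply: lt_le_trans.
  exact: le_lt_trans hd1 (hN x0).
set k := #|` C|.
have k0 : (0 < k)%N by rewrite cardfs_gt0.
have k0R : 0 < k%:R :> R by rewrite ltr0n.
have hdk : d1 / k%:R <= d1.
  by rewrite ler_pdivrMr // ler_peMr // ler1n.
have NC1 w : w \in C -> urange (@chX X Y N C) w by move=> wC; apply: urange_chX'.
split.
  split => //; right; split.
    move=> q [w1 [w2 [_ [_ [_ [-> _]]]]]].
    have pos : 0 < mX (urange (@chX X Y N C)) by case: hmX => _ [+ _]; apply; exists x0; exact: NC1.
    rewrite ler_pdivrMr // mul1r; apply: um_mono => //.
    by move=> x [+ _]; apply: ucrange_sub.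
  move=> q [w1 [w2 [w1r [w2r [w12 [-> _]]]]]].
  have w1C := urange_chX w1r; have w2C := urange_chX w2r.
  rewrite !ucrange_ch // mulrAC ler_pM2r ?invr_gt0 //.
  by apply: hC => //; apply/eqP.
set d := d1 / r / k%:R.
have dr : d * r = d1 / k%:R by rewrite /d; field; rewrite ?gt_eqF // pnatr_eq0 -lt0n.
have Ninj : {in [set` C] &, injective N}.
  move=> y1 y2; rewrite !in_setE /= => y1C y2C e; apply/eqP/negPn/negP => ne.
  have := hC _ _ y1C y2C ne; rewrite e setIid => /(le_trans)/(_ hdk).
  by rewrite leNgt hN.
apply: (@Idelta_eq _ _ _ _ _ _ _ _ _ (N @` [set` C]) C N) => //; split.
  split.
    by move=> A [w /= wC <-]; apply: urange_chY'.
  split.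
    by move=> u /urange_chY [x xC Nxu]; exists (N x); split => //; exists x.
  split.
    move=> A [w /= wC <-]; split; last first.
      by exists w; split; [exact: NC1|rewrite ucrange_ch].
    move=> u u' Nu Nu'; exists 0%N, (fun _ => w); split; first by move=> *; apply: NC1.
    rewrite !ucrange_ch //; do 2! split => //.
    by move=> i /andP[i0 ik]; move: (leq_trans i0 ik).
  split.
    move=> A1 A2 [w1 /= w1C <-] [w2 /= w2C <-] ne.
    rewrite dr; apply: hC => //; apply/eqP => e; apply: ne; by rewrite e.
  by move=> w /urange_chX wC; exists (N w); split; [exists w|rewrite ucrange_ch].
move=> G [_ [_ [G3 [G4 _]]]].
have : forall A, exists w, G A -> w \in C /\ N w `<=` A.
  move=> A; have [GA|nGA] := pselect (G A); last by exists x0.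
  have [w [/urange_chX wC sub]] := (G3 A GA).2.
  by exists w => _; split => //; rewrite -(ucrange_ch wC).
move=> /choice [g gP].
have ginj : {in G &, injective (N \o g)}.
  move=> A1 A2; rewrite !in_setE => GA1 GA2 /= e; apply/eqP/negPn/negP => /eqP ne.
  have := G4 _ _ GA1 GA2 ne; rewrite dr.
  have [g1C g1A] := gP _ GA1; have [g2C g2A] := gP _ GA2.
  have sub : N (g A1) `<=` A1 `&` A2 by move=> y Ny; split; [exact: g1A|apply: g2A; rewrite -e].
  move=> /(le_trans (um_mono hmY1 sub))/(le_trans)/(_ hdk).
  by rewrite leNgt hN.
apply: (card_le_trans (B := (N \o g) @` G)).
  by move: (inj_card_eq ginj); rewrite card_eq_le => /andP[].
apply: subset_card_le => _ [A GA <-]; exists (g A) => //=.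
by have [] := gP _ GA.
Qed.

End Ch.
Unset Implicit Arguments.
Theorem theorem12 (R : realType) (X : pseudoMetricType R) (Y : Type)
  (hXtb : totally_bounded X) (hXsep : hausdorff_space X)
  (N : X -> set Y)
  (mX : set X -> R) (mY1 : set Y -> R) (mY : forall n, set (n.-tuple Y) -> R)
  (hmX : uncertainty_function mX)
  (hmY1 : uncertainty_function mY1) (hmY1T : mY1 setT = 1)
  (hmY : forall n, (0 < n)%N -> uncertainty_function (mY n) /\ mY n setT = 1)
  (xs : X) (hxs : forall x, mY1 (N xs) <= mY1 (N x))
  (delta : nat -> R) (hd1 : 0 <= delta 1%N) (hd1V : delta 1%N < mY1 (N xs))
  (Cb : {fset X}) (db : R) (hdb : 0 <= db)
  (hCbF : inF1 N mX mY1 db Cb)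
  (hdbC : db <= delta 1%N / mY1 (rangeY1 N Cb))
  (hsup : I1 N mY1 db Cb =
     ereal_sup [set v : \bar R | exists (dt : R) (C : {fset X}),
        0 <= dt /\ inF1 N mX mY1 dt C /\ dt <= delta 1%N / mY1 (rangeY1 N C) /\
        v = I1 N mY1 dt C])
  (ha : exists F, overlap_family mY1 (@chY X Y N Cb) (@chX X Y N Cb)
                    (db / (#|` Cb|)%:R) F /\
        forall x, x \notin Cb -> exists S, F S /\ N x `<=` S)
  (hb : db * (1 + 1 / (#|` Cb|)%:R) <= delta 1%N / mY1 (rangeY1 N Cb))
  (hc : forall n, (1 < n)%N ->
        0 <= delta n <= (db * mY1 (N xs) / (#|` Cb|)%:R) ^+ n)
  (hprod : forall n (S : 'I_n -> set Y), (0 < n)%N ->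
        mY n [set y | forall i, S i (tnth y i)] = \prod_(i < n) mY1 (S i))
  (hunion1 : forall S1 S2 : set Y, mY1 (S1 `|` S2) <= mY1 S1 + mY1 S2)
  (hunion : forall n, (0 < n)%N -> forall S1 S2 : set (n.-tuple Y),
        mY n (S1 `|` S2) <= mY n S1 + mY n S2) :
  capacity N mY delta = I1 N mY1 db Cb.
Proof.
set d1 := delta 1%N.
have hNgt x : d1 < mY1 (N x) := lt_le_trans hd1V (hxs x).
have Nne x : N x !=set0.
  apply/set0P/negP => /eqP N0; have := hNgt x; rewrite N0.
  by case: hmY1 => -> _; rewrite ltNge hd1.
have Cb0 : Cb != fset0 by case: hCbF.
have [x0 x0C] := fset0Pn _ Cb0.
set rb := mY1 (rangeY1 N Cb).
have rb0 : 0 < rb.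
  have := um_mono hmY1 (urange_chY' (N:=N) x0C); rewrite /rb /rangeY1; apply: lt_le_trans.
  exact: le_lt_trans hd1 (hNgt x0).
have mVrb : mY1 (N xs) <= rb.
  apply: le_trans (hxs x0) _; exact: (um_mono hmY1 (urange_chY' (N:=N) x0C)).
set kb := #|` Cb|.
have kb0 : (0 < kb)%N by rewrite cardfs_gt0.
have kb0R : 0 < kb%:R :> R by rewrite ltr0n.
set thr := db / kb%:R * rb.
have hthr : thr <= d1 / (kb.+1)%:R.
  have e : thr = db * (1 + 1 / kb%:R) * rb / (kb.+1)%:R.
    rewrite /thr -[kb.+1]addn1 natrD; field.
    by rewrite ?gt_eqF ?ltr0n ?addr_gt0.
  rewrite e ler_pM2r ?invr_gt0 ?ltr0n // -ler_pdivlMr //.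
have thr0 : 0 <= thr by rewrite /thr mulr_ge0 // ?divr_ge0 // ltW.
have hd1k k : d1 / (k.+1)%:R <= d1.
  by rewrite ler_pdivrMr ?ltr0n // ler_peMr // ler1n.
have [F [oF haF]] := ha.
have [[F1 [F2 [F3 [F4 F5]]]] Fmax] := oF.
have F4' S S' : F S -> F S' -> S <> S' -> mY1 (S `&` S') <= thr by move=> *; exact: F4.
have huniq x S S' : F S -> F S' -> N x `<=` S -> N x `<=` S' -> S = S'.
  move=> FS FS' xS xS'; apply/eqP/negPn/negP => /eqP ne.
  have := le_trans (um_mono hmY1 (fun y (Ny : N x y) => conj (xS y Ny) (xS' y Ny))) (F4' _ _ FS FS' ne).
  move=> /le_trans/(_ hthr)/le_trans/(_ (hd1k _)).
  by rewrite leNgt hNgt.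
have : forall x, exists S, F S /\ N x `<=` S.
  move=> x; have [xC|xC] := boolP (x \in Cb); last exact: haF.
  have [S [FS sub]] := F5 x (urange_chX' xC (Nne x)).
  by exists S; split => //; rewrite -(ucrange_ch N xC).
move=> /choice [memf memfP].
have : forall S, exists b, F S -> b \in Cb /\ N b `<=` S.
  move=> S; have [FS|nFS] := pselect (F S); last by exists x0.
  have [w [/urange_chX wC sub]] := (F3 S FS).2.
  by exists w => _; split => //; rewrite -(ucrange_ch N wC).
move=> /choice [repf repfP].
set pat := fun x => repf (memf x).
have m1 S : F S -> memf (repf S) = S.
  move=> FS; have [_ sub] := repfP S FS; have [FS' sub'] := memfP (repf S).
  exact: huniq sub' sub.
have memf_pat x : memf (pat x) = memf x by rewrite /pat m1 //; case: (memfP x).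
have patC x : pat x \in Cb by rewrite /pat; have [] := repfP _ (memfP x).1.
set B := [fset pat b | b in Cb]%fset.
have patB x : pat x \in B.
  have -> : pat x = pat (pat x) by rewrite /pat /= -/(pat x) memf_pat.
  by apply/imfsetP; exists (pat x).
have patid b : b \in B -> pat b = b.
  by move=> /imfsetP [b0 _ ->]; rewrite {1}/pat memf_pat.
have BCb : (#|` B| <= kb)%N.
  apply: fsubset_leq_card; apply/fsubsetP => _ /imfsetP [b0 _ ->]; exact: patC.
set kB := #|` B|.
have kB0 : (0 < kB)%N by rewrite cardfs_gt0; apply/fset0Pn; exists (pat x0).
have cross x y : memf x <> memf y -> mY1 (N x `&` N y) <= thr.
  move=> ne; apply: le_trans (F4' _ _ (memfP x).1 (memfP y).1 ne).
  apply: um_mono => //; move=> z [Nx Ny]; split; [exact: (memfP x).2|exact: (memfP y).2].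
have thrB : thr <= d1 / (kB.+1)%:R.
  apply: le_trans hthr _; apply: (ler_wpM2l hd1).
  by rewrite lef_pV2 ?posrE ?ltr0n ?ler_nat.
have patrepf S : F S -> pat (repf S) = repf S by move=> FS; rewrite /pat m1.
have patinj b1 b2 : b1 \in B -> b2 \in B -> memf b1 = memf b2 -> b1 = b2.
  by move=> b1B b2B e; rewrite -(patid _ b1B) -(patid _ b2B) /pat e.
have hI : I1 N mY1 db Cb = (log2 kB%:R)%:E.
  rewrite /I1; apply: (@Idelta_eq _ _ _ _ _ _ _ _ _ F B memf) => //.
    apply/seteqP; split.
      move=> S FS; exists (repf S); last exact: m1.
      by rewrite /= -(patrepf _ FS).
    by move=> _ [b bB <-]; case: (memfP b).
  by move=> b1 b2; rewrite !in_setE /=; apply: patinj.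
have ln2 : 0 < ln (2 : R) by apply: ln_gt0; rewrite ltr1n.
have log2_lt (a b : nat) : (0 < a)%N -> (a < b)%N -> log2 a%:R < log2 b%:R :> R.
  move=> a0 ab; rewrite /log2 ltr_pM2r ?invr_gt0 // ltr_ln ?posrE ?ltr0n ?ltr_nat //.
  exact: leq_trans ab.
have core x x' : x != x' -> memf x = memf x' -> d1 / (kB.+1)%:R < mY1 (N x `&` N x').
  move=> nxx' exx'; rewrite ltNge; apply/negP => hle.
  set C' := (x |` (x' |` (B `\ pat x)))%fset.
  have patx' : pat x' = pat x by rewrite /pat exx'.
  have xB : x \notin (B `\ pat x)%fset.
    apply/negP => /fsetD1P [ne xB]; by rewrite (patid _ xB) eqxx in ne.
  have x'B : x' \notin (B `\ pat x)%fset.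
    apply/negP => /fsetD1P [ne x'B]; by rewrite -patx' (patid _ x'B) eqxx in ne.
  have cardC' : #|` C'| = kB.+1.
    rewrite /C' cardfsU1 in_fset1U negb_or nxx' xB /= cardfsU1 x'B /=.
    by rewrite /kB (cardfsD1 (pat x) B) patB !add1n.
  have C'0 : C' != fset0 by apply/fset0Pn; exists x; rewrite /C' fset1U1.
  have inC' y : y \in C' -> pat y = pat x -> y = x \/ y = x'.
    rewrite /C' !inE => /orP [/eqP->|/orP [/eqP->|/andP [ne yB]]]; [by left|by right|].
    by rewrite (patid _ yB) => e; rewrite e eqxx in ne.
  have inC'2 y : y \in C' -> pat y != pat x -> pat y = y.
    rewrite /C' !inE => /orP [/eqP->|/orP [/eqP->|/andP [ne yB]]]; rewrite ?patx' ?eqxx //.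
    by rewrite (patid _ yB).
  have pw y1 y2 : y1 \in C' -> y2 \in C' -> y1 != y2 ->
      mY1 (N y1 `&` N y2) <= d1 / (#|` C'|)%:R.
    move=> y1C y2C ne; rewrite cardC'.
    have [e|ne'] := eqVneq (memf y1) (memf y2); last first.
      by apply: le_trans thrB; apply: cross; apply/eqP.
    have pe : pat y1 = pat y2 by rewrite /pat e.
    have [px|px] := eqVneq (pat y1) (pat x).
      have px2 : pat y2 = pat x by rewrite -pe.
      move: ne; case: (inC' _ y1C px) => ->; case: (inC' _ y2C px2) => ->; rewrite ?eqxx //= => _.
      by rewrite setIC.
    have px2 : pat y2 != pat x by rewrite -pe.
    by move: ne; rewrite -(inC'2 _ y1C px) -(inC'2 _ y2C px2) pe eqxx.
  have [inF hI'] := codeI hmX hmY1 hd1 hNgt C'0 pw.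
  have hge : (I1 N mY1 (d1 / mY1 (rangeY1 N C')) C' <= I1 N mY1 db Cb)%E.
    rewrite hsup; apply: ereal_sup_ubound; exists (d1 / mY1 (rangeY1 N C')), C'.
    by split; [apply: divr_ge0 => //; exact: um_ge0|split].
  by move: hge; rewrite hI hI' cardC' lee_fin leNgt log2_lt.
set t := d1 / (kB.+1)%:R.
have t0 : 0 <= t by rewrite /t divr_ge0.
have ub n (C : {fset n.-tuple X}) : (0 < n)%N -> distinguishable N mY C (delta n) ->
    delta n / (#|` C|)%:R <= t ^+ n -> (#|` C| <= kB ^ n)%N.
  move=> n0 hdist hdt.
  pose g := fun u : C => [tuple [` patB (tnth (val u) i)]%fset | i < n].
  have ginj : injective g.
    move=> u1 u2 e; apply: val_inj; apply/eqP/negPn/negP => ne.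
    have hpat i : pat (tnth (val u1) i) = pat (tnth (val u2) i).
      by have := congr1 (fun v => val (tnth v i)) e; rewrite /g /= !tnth_mktuple.
    have := hdist (val u1) (val u2) (valP u1) (valP u2) ne.
    rewrite (hmY n n0).2 divr1.
    have -> : SN N (val u1) `&` SN N (val u2) =
        [set y | forall i, (N (tnth (val u1) i) `&` N (tnth (val u2) i)) (tnth y i)].
      apply/seteqP; split => y /=; first by move=> [h1 h2] i; split.
      by move=> h; split => i; case: (h i).
    rewrite (hprod n (fun i => N (tnth (val u1) i) `&` N (tnth (val u2) i))) //; apply/negP; rewrite -ltNge.
    apply: le_lt_trans hdt _.
    have -> : t ^+ n = \prod_(i < n) t by rewrite prodr_const card_ord.
    apply: ltr_prod.
      by apply/hasP; exists (Ordinal n0) => //; rewrite mem_index_enum.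
    move=> i _; rewrite t0 /=.
    have [eq|nei] := eqVneq (tnth (val u1) i) (tnth (val u2) i).
      by rewrite eq setIid; exact: le_lt_trans (hd1k _) (hNgt _).
    by apply: (core _ _ nei); rewrite -memf_pat hpat memf_pat.
  have := leq_card g ginj; rewrite card_tuple -!cardfE.
  by rewrite /kB.
have kB0R : 0 < kB%:R :> R by rewrite ltr0n.
have rate_ub n : (0 < n)%N -> (rate N mY n (delta n) <= (log2 kB%:R)%:E)%E.
  move=> n0; apply: ge_ereal_sup => _ [C [C0 hdist] <-].
  have cC : (0 < #|` C|)%N by rewrite cardfs_gt0.
  have hC : (#|` C| <= kB ^ n)%N.
    have [n1|n1] := eqVneq n 1%N.
      subst n; rewrite expn1; case: (leqP #|` C| kB) => // big.
      have := ub 1%N C n0 hdist; rewrite expn1 => /(_ _).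
      rewrite leqNgt big => /(_ _) //; apply.
      rewrite expr1; apply: (ler_wpM2l hd1).
      by rewrite lef_pV2 ?posrE ?ltr0n ?ler_nat.
    apply: ub => //.
    have n2 : (1 < n)%N by rewrite ltn_neqAle eq_sym n1 n0.
    have [dn0 dnle] := andP (hc n n2).
    apply: le_trans (_ : delta n <= _).
      by rewrite ler_pdivrMr ?ltr0n // ler_peMr // ler1n.
    apply: le_trans dnle _.
    have a0 : 0 <= db * mY1 (N xs) / kb%:R.
      by rewrite divr_ge0 // mulr_ge0 //; exact: um_ge0.
    apply: lerXn2r; rewrite ?nnegrE //.
    apply: le_trans thrB; rewrite /thr mulrAC; apply: ler_wpM2l => //.
    by rewrite divr_ge0 // ltW.
  rewrite lee_fin ler_pdivrMr ?ltr0n // /log2 mulrAC ler_pM2r ?invr_gt0 //.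
  rewrite mulr_natr -lnXn // ler_ln ?posrE ?ltr0n ?exprn_gt0 //.
  by rewrite -natrX ler_nat.
set C1 := [fset [tuple b] | b in B]%fset.
have cardC1 : #|` C1| = kB.
  rewrite /C1 card_in_imfset //= => b1 b2 _ _ e.
  by have := congr1 (fun v : 1.-tuple X => tnth v ord0) e.
have rate_lb : ((log2 kB%:R)%:E <= rate N mY 1 (delta 1%N))%E.
  have -> : log2 kB%:R = log2 (#|` C1|)%:R / (1%N)%:R :> R by rewrite cardC1 -[(1%N)%:R]/(1 : R) divr1.
  apply: ereal_sup_ubound; exists C1 => //; split.
    by rewrite -cardfs_gt0 cardC1.
  move=> _ _ /imfsetP [b1 b1B ->] /imfsetP [b2 b2B ->] ne.
  have b12 : b1 != b2 by apply: contraNneq ne => ->.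
  rewrite (hmY 1%N isT).2 divr1 cardC1.
  have -> : SN N [tuple b1] `&` SN N [tuple b2] =
      [set y | forall i : 'I_1, (N b1 `&` N b2) (tnth y i)].
    apply/seteqP; split => y /=.
      by move=> [h1 h2] i; have := h1 i; have := h2 i; rewrite !(ord1 i).
    by move=> h; split => i; case: (h i); rewrite (ord1 i).
  rewrite (hprod 1%N (fun _ => N b1 `&` N b2)) // big_ord1.
  apply: le_trans (cross _ _ _) _.
    by move=> e; move: b12; rewrite (patinj _ _ b1B b2B e) eqxx.
  apply: le_trans thrB _; apply: (ler_wpM2l hd1).
  by rewrite lef_pV2 ?posrE ?ltr0n // ler_nat.
rewrite hI; apply/eqP; rewrite eq_le; apply/andP; split.
  by apply: ge_ereal_sup => _ [n n0 <-]; exact: rate_ub.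
apply: le_trans rate_lb _; apply: ereal_sup_ubound; by exists 1%N.
Qed.
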